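(* Let $1/4\le\beta<1/3$ and let $G$ be a graph of order $n$ with minimum degree $(1-\beta)n$. Then $$(1+3\beta)k_3+\frac{2}{1-2\beta}\left(1-3\beta+\frac{4\beta-1}{29-75\beta}\right)\sum_{T\in\mathcal{K}_3}D_+(T)\ \ge\ 2(1-2\beta)\beta n k_2+\frac{4k_4}{n}.$$ Moreover, if equality holds, then $G$ is $(1-\beta)n$-regular and every edge $e$ satisfies $D(e)=1-2\beta$ or $D(e)=2\beta$.
   Context: All graphs are finite and simple. For a graph $G$, $\mathcal{K}_t$ is the set of $t$-cliques and $k_t=|\mathcal{K}_t|$. The degree $d(T)$ of a clique $T$ is the number of cliques with one more vertex containing $T$, and $D(T)=d(T)/n$. Here $p=\lceil\beta^{-1}\rceil-1=3$. For $T\in\mathcal{K}_t$, $1\le t\le 4$, $D_-(T)=\min\{D(T),(4-t)\beta\}$ and $D_+(T)=D(T)-D_-(T)$. *)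

(* Defs.v *)
From HB Require Import structures.
From mathcomp Require Import all_boot all_order all_algebra.
Set Implicit Arguments. Unset Strict Implicit. Unset Printing Implicit Defensive.
Import Order.TTheory GRing.Theory Num.Theory.

(* A finite simple graph: vertex type V : finType, adjacency e : rel V,
   assumed symmetric and irreflexive in the theorem. *)
Section Graph.
Variables (V : finType) (e : rel V).

Definition is_clique (S : {set V}) : bool :=
  [forall x in S, forall y in S, (x != y) ==> e x y].

Definition cliques (t : nat) : {set {set V}} :=
  [set S : {set V} | is_clique S && (#|S| == t)].

Definition kcount (t : nat) : nat := #|cliques t|.

Definition vdeg (x : V) : nat := #|[set y | e x y]|.

Definition cdeg (T : {set V}) : nat :=
  #|[set S in cliques (#|T|.+1) | T \subset S]|.

Local Open Scope ring_scope.
Variable R : realFieldType.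

Definition Dn (T : {set V}) : R := (cdeg T)%:R / (#|V|%:R).

Definition Dminus (beta : R) (T : {set V}) : R :=
  Num.min (Dn T) ((4 - #|T|)%:R * beta).

Definition Dplus (beta : R) (T : {set V}) : R := Dn T - Dminus beta T.

End Graph.

(* Main.v *)
Require Import Defs.
From HB Require Import structures.
From mathcomp Require Import all_boot all_order all_algebra.
From Stdlib Require Import Ring Field Lia.
Import Order.TTheory GRing.Theory Num.Theory.

Set Implicit Arguments. Unset Strict Implicit. Unset Printing Implicit Defensive.

Section AbsF.
Variables (T:Type) (zero one : T) (add mul : T->T->T) (opp inv : T->T).
Hypothesis Fth : field_theory zero one add mul (fun x y => add x (opp y)) opp (fun x y => mul x (inv y)) inv eq.
Add Field AF : Fth.
Fixpoint nt (k:nat) : T := match k with 0 => zero | 1 => one | S k => add one (nt k) end.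
Local Notation N := nt.
Hypothesis Hchar : forall n, nt (S n) <> zero.
Lemma mulnz x y : x <> zero -> y <> zero -> mul x y <> zero.
Proof. intros hx hy h; apply hy.
  transitivity (mul (mul (inv x) x) y). field; auto.
  transitivity (mul (inv x) (mul x y)). ring. rewrite h; ring. Qed.
Ltac nzs := repeat (apply mulnz); auto.
Local Notation "0" := zero.
Local Notation "1" := one.
Local Notation "x + y" := (add x y).
Local Notation "x * y" := (mul x y).
Local Notation "- x" := (opp x).
Local Notation "x - y" := (add x (opp y)).
Local Notation "x / y" := (mul x (inv y)).
Ltac fs := pose proof (@Hchar 17); pose proof (@Hchar 8); pose proof (@Hchar O); pose proof (@Hchar (S O)); pose proof (@Hchar (S (S O))); pose proof (@Hchar (S (S (S O))));
  pose proof (@Hchar (S (S (S (S (S O)))))); pose proof (@Hchar (S (S (S (S (S (S (S (S O))))))))); pose proof (@Hchar (Nat.pred (Nat.pow (S (S O)) (S (S (S (S O)))))));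
  cbn [nt] in *; field; repeat split;
  (solve [nzs] || match goal with H: ?F <> zero |- _ => let HH := fresh in intro HH; apply H; rewrite <- HH; ring end).

Definition phi1 a l K u := a + l * u - K / u.
Definition phi2 a l K1 K2 w u := a + l * u - K1 / u - K2 / (w - u).

Local Notation m b := (1 - N 2 * b).
Local Notation k b := ((1 - N 2 * b) / (1 - b)).
Local Notation K1a b := (N 4 * (1 - N 2 * b) * b).
Local Notation K2a b := (N 2 * (1 - N 2 * b) * b).
Local Notation K1b b := (N 6 * (1 - N 2 * b) * b).
Local Notation al1 b := (1 + N 2 * b + (1 - N 2 * b) / (1 - b) * b).
Local Notation al3 b := (1 + N 2 * b + (1 - N 2 * b) / (1 - b) * (N 2 - N 2 * b)).
Local Notation alt b u := (1 + N 2 * b - (1 - N 2 * b) / (1 - b) * (N 2 * u - N 2 + N 2 * b) - N 4 * (1 - N 2 * b) * b / u).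
Local Notation ww b := (N 2 - N 3 * b).
Local Notation qq b := ((N 2 - N 3 * b) / N 2).
Local Notation VV b := (b * (N 3 + (N 4 * b - 1) * (N 19 - N 12 * b)) / (N 16 * (1 - b) * (N 2 - N 3 * b))).

Lemma ID_red u x2 x3 : u <> 0 -> x2 <> 0 -> x3 <> 0 -> x2 + x3 - u <> 0 ->
  N 2 / u + 1 / (x2 + x3 - u) - (1 / u + 1 / x2 + 1 / x3)
  = (x2 - u) * (x3 - u) * (x2 + x3) / (u * (x2 + x3 - u) * x2 * x3).
Proof. intros; fs. Qed.

Lemma ID_caseI b c s a x1 x2 x3 :
  1 + N 3 * b + c * (a - a) - a - N 2 * (1 - N 2 * b) * b * (1 / x1 + 1 / x2 + 1 / x3)
  = s + ((x1 + x2 + x3 - N 2 + N 3 * b - s) - a)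
    + (N 3 - N 2 * x1 - (x2 + x3 - x1) - N 2 * (1 - N 2 * b) * b * (N 2 / x1 + 1 / (x2 + x3 - x1)))
    + N 2 * (1 - N 2 * b) * b * ((N 2 / x1 + 1 / (x2 + x3 - x1)) - (1 / x1 + 1 / x2 + 1 / x3)).
Proof. pose proof (@Hchar O). cbn [nt]; ring. Qed.

Lemma ID_caseI2 b u t : u <> 0 -> t <> 0 ->
  N 3 - N 2 * u - t - N 2 * (1 - N 2 * b) * b * (N 2 / u + 1 / t)
  = N 2 * ((u - (1 - N 2 * b)) * (N 2 * b - u) / u) + (t - (1 - N 2 * b)) * (N 2 * b - t) / t.
Proof. intros; fs. Qed.

Lemma ID_chord a l K1 K2 w p q u : p <> 0 -> q <> 0 -> u <> 0 -> w - p <> 0 -> w - q <> 0 -> w - u <> 0 ->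
  (q - p) * phi2 a l K1 K2 w u = (q - u) * phi2 a l K1 K2 w p + (u - p) * phi2 a l K1 K2 w q
   + K1 * ((q - u) * (u - p) * (q - p) / (p * q * u))
   + K2 * ((q - u) * (u - p) * (q - p) / ((w - p) * (w - q) * (w - u))).
Proof. unfold phi2; intros; fs. Qed.

Lemma ID_chord1 a l K p q u : p <> 0 -> q <> 0 -> u <> 0 ->
  (q - p) * phi1 a l K u = (q - u) * phi1 a l K p + (u - p) * phi1 a l K q
   + K * ((q - u) * (u - p) * (q - p) / (p * q * u)).
Proof. unfold phi1; intros; fs. Qed.

Lemma ID_k b c A r : 1 - b <> 0 ->
  1 + N 3 * b + c * (A - b) - A - N 2 * (1 - N 2 * b) * b * r
  = (1 + N 2 * b - (1 - N 2 * b) / (1 - b) * (A - b) - N 2 * (1 - N 2 * b) * b * r)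
    + (c - b / (1 - b)) * (A - b).
Proof. intros; fs. Qed.

Lemma ID_F1m b : 1 - b <> 0 -> m b <> 0 -> ww b - m b <> 0 ->
  phi2 (al1 b) (- k b) (K1a b) (K2a b) (ww b) (m b) = 0.
Proof. unfold phi2; intros; fs. Qed.

Lemma ID_F1q b : 1 - b <> 0 -> N 2 <> 0 -> ww b <> 0 -> ww b - qq b <> 0 ->
  phi2 (al1 b) (- k b) (K1a b) (K2a b) (ww b) (qq b) = VV b.
Proof. unfold phi2; intros; fs. Qed.

Lemma ID_F2q b : 1 - b <> 0 ->
  phi1 (al1 b) (- k b) (K1b b) 1 = N 2 * b * (N 6 * b - 1).
Proof. unfold phi1; intros; fs. Qed.

Lemma ID_F2p b : 1 - b <> 0 -> N 2 <> 0 -> ww b <> 0 ->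
  phi1 (al1 b) (- k b) (K1b b) (qq b) = VV b.
Proof. unfold phi1; intros; fs. Qed.

Lemma ID_F3p b : 1 - b <> 0 -> N 3 <> 0 -> N 2 - N 2 * b <> 0 ->
  phi1 (al3 b) (- (N 3 * k b)) (K1b b) ((N 2 - N 2 * b) / N 3) = (N 4 * b - 1) * (N 4 * b - 1) / (1 - b).
Proof. unfold phi1; intros; fs. Qed.

Lemma ID_F3q b : 1 - b <> 0 -> N 2 <> 0 -> ww b <> 0 ->
  phi1 (al3 b) (- (N 3 * k b)) (K1b b) (qq b) = VV b.
Proof. unfold phi1; intros; fs. Qed.

Lemma ID_IIa b u t : 1 - b <> 0 -> u <> 0 -> t <> 0 ->
  1 + N 2 * b - (1 - N 2 * b) / (1 - b) * ((N 2 * u + t - N 2 + N 3 * b) - b)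
    - N 2 * (1 - N 2 * b) * b * (N 2 / u + 1 / t)
  = phi1 (alt b u) (- k b) (K2a b) t.
Proof. unfold phi1; intros; fs. Qed.

Lemma ID_IIa1 b u : 1 - b <> 0 -> u <> 0 -> ww b - u <> 0 ->
  phi1 (alt b u) (- k b) (K2a b) (ww b - u) = phi2 (al1 b) (- k b) (K1a b) (K2a b) (ww b) u.
Proof. unfold phi1, phi2; intros; fs. Qed.

Lemma ID_IIa2 b u : 1 - b <> 0 -> u <> 0 -> N 2 - N 2 * b - N 2 * u <> 0 ->
  phi1 (alt b u) (- k b) (K2a b) (N 2 - N 2 * b - N 2 * u)
  = N 2 * ((u - (1 - N 2 * b)) * (N 2 * b - u) / u)
    + ((N 2 - N 2 * b - N 2 * u) - (1 - N 2 * b)) * (N 2 * b - (N 2 - N 2 * b - N 2 * u)) / (N 2 - N 2 * b - N 2 * u).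
Proof. unfold phi1; intros; fs. Qed.

Lemma ID_IIa3 b u : 1 - b <> 0 -> u <> 0 ->
  phi1 (alt b u) (- k b) (K2a b) u = phi1 (al3 b) (- (N 3 * k b)) (K1b b) u.
Proof. unfold phi1; intros; fs. Qed.

Lemma ID_IIb1 b u t : 1 - b <> 0 -> u <> 0 -> t <> 0 -> ww b - u <> 0 ->
  1 + N 2 * b - (1 - N 2 * b) / (1 - b) * (u - b) - N 2 * (1 - N 2 * b) * b * (N 2 / u + 1 / t)
  = phi2 (al1 b) (- k b) (K1a b) (K2a b) (ww b) u + (K2a b / (ww b - u) - K2a b / t).
Proof. unfold phi2; intros; fs. Qed.

Lemma ID_IIb2 b u t : 1 - b <> 0 -> u <> 0 -> t <> 0 ->
  1 + N 2 * b - (1 - N 2 * b) / (1 - b) * (u - b) - N 2 * (1 - N 2 * b) * b * (N 2 / u + 1 / t)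
  = phi1 (al1 b) (- k b) (K1b b) u + (K2a b / u - K2a b / t).
Proof. unfold phi1; intros; fs. Qed.

Definition cc b := N 2 / (1 - N 2 * b) * (1 - N 3 * b + (N 4 * b - 1) / (N 29 - N 75 * b)).

Lemma ID_c1 b : 1 - b <> 0 -> 1 - N 2 * b <> 0 -> N 29 - N 75 * b <> 0 ->
  cc b - b / (1 - b) = (1 - N 3 * b) * (N 200 * b * b - N 233 * b + N 56) / ((1 - N 2 * b) * (N 29 - N 75 * b) * (1 - b)).
Proof. unfold cc; intros; fs. Qed.

Lemma ID_c2 b : 1 - N 2 * b <> 0 -> N 29 - N 75 * b <> 0 ->
  1 - cc b = N 3 * (N 4 * b - 1) * (N 9 - N 25 * b) / ((1 - N 2 * b) * (N 29 - N 75 * b)).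
Proof. unfold cc; intros; fs. Qed.

Lemma ID_c3 b : N 9 <> 0 ->
  N 200 * b * b - N 233 * b + N 56 = (N 5 + (1 - N 3 * b) * (N 499 - N 600 * b)) / N 9.
Proof. intros; fs. Qed.

Lemma L_b b : b = ((N 4 * b - 1) + 1) / N 4.
Proof. fs. Qed.
Lemma L_1b b : 1 - b = ((1 - N 3 * b) + N 2) / N 3.
Proof. fs. Qed.
Lemma L_12b b : 1 - N 2 * b = (N 2 * (1 - N 3 * b) + 1) / N 3.
Proof. fs. Qed.
Lemma L_23b b : N 2 - N 3 * b = (1 - N 3 * b) + 1.
Proof. fs. Qed.
Lemma L_1912 b : N 19 - N 12 * b = N 4 * (1 - N 3 * b) + N 15.
Proof. fs. Qed.
Lemma L_2975 b : N 29 - N 75 * b = N 25 * (1 - N 3 * b) + N 4.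
Proof. fs. Qed.
Lemma L_925 b : N 9 - N 25 * b = (N 25 * (1 - N 3 * b) + N 2) / N 3.
Proof. fs. Qed.
Lemma L_499 b : N 499 - N 600 * b = N 200 * (1 - N 3 * b) + N 299.
Proof. fs. Qed.
Lemma L_61 b : N 6 * b - 1 = (N 3 * (N 4 * b - 1) + 1) / N 2.
Proof. fs. Qed.
Lemma L_3b b : 1 - N 3 * b = (N 3 * (1 / N 3 - b)).
Proof. fs. Qed.
Lemma L_4b b : N 4 * b - 1 = (N 4 * (b - 1 / N 4)).
Proof. fs. Qed.
Lemma L_mb b : (1 - N 2 * b) - b = 1 - N 3 * b.
Proof. fs. Qed.

Lemma L_i b u t : (N 2 * u + t - N 2 + N 3 * b) - u = t - (N 2 - N 3 * b - u).
Proof. fs. Qed.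
Lemma L_iii b u t : (N 2 * u + t - N 2 + N 3 * b) - b = t - (N 2 - N 2 * b - N 2 * u).
Proof. fs. Qed.
Lemma L_iv b u : (N 2 - N 3 * b) / N 2 - u = ((N 2 - N 3 * b - u) - u) / N 2.
Proof. fs. Qed.
Lemma L_v b u : N 2 * b - u = ((N 2 - N 2 * b - N 2 * u) - u) / N 3 + N 2 * (N 4 * b - 1) / N 3.
Proof. fs. Qed.
Lemma L_vi b u : N 2 * b - (N 2 - N 2 * b - N 2 * u) = N 2 * (u - (1 - N 2 * b)).
Proof. fs. Qed.
Lemma L_viii b u : u - (N 2 - N 2 * b) / N 3 = (u - (N 2 - N 2 * b - N 2 * u)) / N 3.
Proof. fs. Qed.
Lemma L_x b : (N 2 - N 3 * b) / N 2 - (1 - N 2 * b) = b / N 2.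
Proof. fs. Qed.
Lemma L_xi b : (N 2 - N 3 * b) - (N 2 - N 3 * b) / N 2 = (N 2 - N 3 * b) / N 2.
Proof. fs. Qed.
Lemma L_xii b : (N 2 - N 3 * b) / N 2 - (N 2 - N 2 * b) / N 3 = (N 5 * (1 - N 3 * b) + 1) / N 18.
Proof. fs. Qed.
Lemma L_xiii b : 1 - (N 2 - N 3 * b) / N 2 = N 3 * b / N 2.
Proof. fs. Qed.
Lemma L_t1 x1 x2 x3 : (x2 + x3 - x1) - x1 = (x2 - x1) + (x3 - x1).
Proof. fs. Qed.
Lemma L_t2 x1 x2 x3 : (x2 + x3 - x1) - x2 = x3 - x1.
Proof. fs. Qed.
Lemma L_P b x1 x2 x3 : N 2 * x1 + (x2 + x3 - x1) - N 2 + N 3 * b = x1 + x2 + x3 - N 2 + N 3 * b.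
Proof. fs. Qed.
Lemma L_tb b x1 x2 x3 : N 2 * b - (x2 + x3 - x1) = (b - (x1 + x2 + x3 - N 2 + N 3 * b)) + N 2 * (x1 - (1 - N 2 * b)).
Proof. fs. Qed.
Lemma L_w2 b u : (N 2 - N 3 * b) - u = (N 2 - N 3 * b - u).
Proof. fs. Qed.
Lemma L_22b b : N 2 - N 2 * b = (1 - N 2 * b) + 1.
Proof. fs. Qed.
Lemma L_tm b c a mn A R3 Rr :
  1 + N 3 * b + c * (a - mn) - a - N 2 * (1 - N 2 * b) * b * R3
  = (1 + N 3 * b + c * (A - b) - A - N 2 * (1 - N 2 * b) * b * Rr)
    + ((c * (a - mn) - a) - (c * (A - b) - A)) + N 2 * (1 - N 2 * b) * b * (Rr - R3).
Proof. fs. Qed.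
Lemma L_g b c a A : c * (a - b) - a - (c * (A - b) - A) = (1 - c) * (A - a).
Proof. fs. Qed.
Lemma L_g2 b c a A : c * (a - a) - a - (c * (A - b) - A) = (1 - c) * (A - b) + (b - a).
Proof. fs. Qed.
Lemma L_sy b ya yb yc x y z :
  x + y + z - ya - yb - yc + 1 = x + y + z - N 2 + N 3 * b - (ya + yb + yc - N 3 * (1 - b)).
Proof. fs. Qed.
Lemma L_s3 b ya yb yc : ya + yb + yc - N 3 * (1 - b) = (ya - (1 - b)) + (yb - (1 - b)) + (yc - (1 - b)).
Proof. fs. Qed.
Lemma L_xm b ya yb : (ya + yb - 1) - (1 - N 2 * b) = (ya - (1 - b)) + (yb - (1 - b)).
Proof. fs. Qed.
Lemma L_div3 p q n : n <> 0 -> p / n + q / n - 1 = (p + q - n) / n.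
Proof. intros; fs. Qed.
Lemma L_div4 pa pb pc qab qac qbc r n : n <> 0 ->
  qab / n + qac / n + qbc / n - pa / n - pb / n - pc / n + 1 - r / n
  = (n + qab + qac + qbc - (pa + pb + pc + r)) / n.
Proof. intros; fs. Qed.
Lemma L_fin A C D K n k : A + C - D - K * (n * k) = A + C - (K * n * k + D).
Proof. fs. Qed.
Lemma L_2b b : (1 - b) + (1 - b) - 1 = 1 - N 2 * b.
Proof. fs. Qed.
End AbsF.


Local Open Scope ring_scope.

Section Real.
Variable R : realFieldType.

Lemma FthR : field_theory (0:R) 1 +%R *%R (fun x y => x + - y) -%R (fun x y => x * y^-1) GRing.inv eq.
Proof.
constructor.
- constructor; move=> *; rewrite ?add0r ?addrA ?mul1r ?mulrA ?mulrDl ?subrr //;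
  try (by rewrite addrC); try (by rewrite mulrC).
- by apply/eqP; rewrite oner_eq0.
- by [].
- by move=> x /eqP hx; rewrite mulVf.
Qed.

Lemma ntR n : nt (0:R) 1 +%R n = n%:R.
Proof. elim: n => [//|[|n] IH] //=; try by rewrite IH mulrS. Qed.

Lemma HcR n : nt (0:R) 1 +%R n.+1 <> 0.
Proof. by rewrite ntR; apply/eqP; rewrite pnatr_eq0. Qed.

Local Notation F := FthR.
Local Notation H := HcR.
Local Notation m b := (1 - 2 * b).
Local Notation k b := ((1 - 2 * b) / (1 - b)).
Local Notation K1a b := (4 * (1 - 2 * b) * b).
Local Notation K2a b := (2 * (1 - 2 * b) * b).
Local Notation K1b b := (6 * (1 - 2 * b) * b).
Local Notation al1 b := (1 + 2 * b + (1 - 2 * b) / (1 - b) * b).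
Local Notation al3 b := (1 + 2 * b + (1 - 2 * b) / (1 - b) * (2 - 2 * b)).
Local Notation alt b u := (1 + 2 * b - (1 - 2 * b) / (1 - b) * (2 * u - 2 + 2 * b) - 4 * (1 - 2 * b) * b / u).
Local Notation ww b := (2 - 3 * b).
Local Notation qq b := ((2 - 3 * b) / 2).
Local Notation VV b := (b * (3 + (4 * b - 1) * (19 - 12 * b)) / (16 * (1 - b) * (2 - 3 * b))).
Local Notation phi1 a l K u := (a + l * u - K / u).
Local Notation phi2 a l K1 K2 w u := (a + l * u - K1 / u - K2 / (w - u)).
Local Notation cc b := (2 / (1 - 2 * b) * (1 - 3 * b + (4 * b - 1) / (29 - 75 * b))).
Lemma M_red (u x2 x3 : R) : u <> 0 -> x2 <> 0 -> x3 <> 0 -> x2 + x3 - u <> 0 ->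
  2 / u + 1 / (x2 + x3 - u) - (1 / u + 1 / x2 + 1 / x3)
  = (x2 - u) * (x3 - u) * (x2 + x3) / (u * (x2 + x3 - u) * x2 * x3).
Proof. move=> *; eapply (ID_red FthR HcR); eauto. Qed.
Lemma M_caseI (b c s a x1 x2 x3 : R) :
  1 + 3 * b + c * (a - a) - a - 2 * (1 - 2 * b) * b * (1 / x1 + 1 / x2 + 1 / x3)
  = s + ((x1 + x2 + x3 - 2 + 3 * b - s) - a)
    + (3 - 2 * x1 - (x2 + x3 - x1) - 2 * (1 - 2 * b) * b * (2 / x1 + 1 / (x2 + x3 - x1)))
    + 2 * (1 - 2 * b) * b * ((2 / x1 + 1 / (x2 + x3 - x1)) - (1 / x1 + 1 / x2 + 1 / x3)).
Proof. move=> *; eapply (ID_caseI FthR HcR); eauto. Qed.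
Lemma M_caseI2 (b u t : R) : u <> 0 -> t <> 0 ->
  3 - 2 * u - t - 2 * (1 - 2 * b) * b * (2 / u + 1 / t)
  = 2 * ((u - (1 - 2 * b)) * (2 * b - u) / u) + (t - (1 - 2 * b)) * (2 * b - t) / t.
Proof. move=> *; eapply (ID_caseI2 FthR HcR); eauto. Qed.
Lemma M_chord (a l K1 K2 w p q u : R) : p <> 0 -> q <> 0 -> u <> 0 -> w - p <> 0 -> w - q <> 0 -> w - u <> 0 ->
  (q - p) * phi2 a l K1 K2 w u = (q - u) * phi2 a l K1 K2 w p + (u - p) * phi2 a l K1 K2 w q
   + K1 * ((q - u) * (u - p) * (q - p) / (p * q * u))
   + K2 * ((q - u) * (u - p) * (q - p) / ((w - p) * (w - q) * (w - u))).
Proof. move=> *; eapply (ID_chord FthR HcR); eauto. Qed.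
Lemma M_chord1 (a l K p q u : R) : p <> 0 -> q <> 0 -> u <> 0 ->
  (q - p) * phi1 a l K u = (q - u) * phi1 a l K p + (u - p) * phi1 a l K q
   + K * ((q - u) * (u - p) * (q - p) / (p * q * u)).
Proof. move=> *; eapply (ID_chord1 FthR HcR); eauto. Qed.
Lemma M_k (b c A r : R) : 1 - b <> 0 ->
  1 + 3 * b + c * (A - b) - A - 2 * (1 - 2 * b) * b * r
  = (1 + 2 * b - (1 - 2 * b) / (1 - b) * (A - b) - 2 * (1 - 2 * b) * b * r)
    + (c - b / (1 - b)) * (A - b).
Proof. move=> *; eapply (ID_k FthR HcR); eauto. Qed.
Lemma M_F1m (b : R) : 1 - b <> 0 -> m b <> 0 -> ww b - m b <> 0 ->
  phi2 (al1 b) (- k b) (K1a b) (K2a b) (ww b) (m b) = 0.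
Proof. move=> *; eapply (ID_F1m FthR HcR); eauto. Qed.
Lemma M_F1q (b : R) : 1 - b <> 0 -> (2:R) <> 0 -> ww b <> 0 -> ww b - qq b <> 0 ->
  phi2 (al1 b) (- k b) (K1a b) (K2a b) (ww b) (qq b) = VV b.
Proof. move=> *; eapply (ID_F1q FthR HcR); eauto. Qed.
Lemma M_F2q (b : R) : 1 - b <> 0 ->
  phi1 (al1 b) (- k b) (K1b b) 1 = 2 * b * (6 * b - 1).
Proof. move=> *; eapply (ID_F2q FthR HcR); eauto. Qed.
Lemma M_F2p (b : R) : 1 - b <> 0 -> (2:R) <> 0 -> ww b <> 0 ->
  phi1 (al1 b) (- k b) (K1b b) (qq b) = VV b.
Proof. move=> *; eapply (ID_F2p FthR HcR); eauto. Qed.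
Lemma M_F3p (b : R) : 1 - b <> 0 -> (3:R) <> 0 -> 2 - 2 * b <> 0 ->
  phi1 (al3 b) (- (3 * k b)) (K1b b) ((2 - 2 * b) / 3) = (4 * b - 1) * (4 * b - 1) / (1 - b).
Proof. move=> *; eapply (ID_F3p FthR HcR); eauto. Qed.
Lemma M_F3q (b : R) : 1 - b <> 0 -> (2:R) <> 0 -> ww b <> 0 ->
  phi1 (al3 b) (- (3 * k b)) (K1b b) (qq b) = VV b.
Proof. move=> *; eapply (ID_F3q FthR HcR); eauto. Qed.
Lemma M_IIa (b u t : R) : 1 - b <> 0 -> u <> 0 -> t <> 0 ->
  1 + 2 * b - (1 - 2 * b) / (1 - b) * ((2 * u + t - 2 + 3 * b) - b)
    - 2 * (1 - 2 * b) * b * (2 / u + 1 / t)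
  = phi1 (alt b u) (- k b) (K2a b) t.
Proof. move=> *; eapply (ID_IIa FthR HcR); eauto. Qed.
Lemma M_IIa1 (b u : R) : 1 - b <> 0 -> u <> 0 -> ww b - u <> 0 ->
  phi1 (alt b u) (- k b) (K2a b) (ww b - u) = phi2 (al1 b) (- k b) (K1a b) (K2a b) (ww b) u.
Proof. move=> *; eapply (ID_IIa1 FthR HcR); eauto. Qed.
Lemma M_IIa2 (b u : R) : 1 - b <> 0 -> u <> 0 -> 2 - 2 * b - 2 * u <> 0 ->
  phi1 (alt b u) (- k b) (K2a b) (2 - 2 * b - 2 * u)
  = 2 * ((u - (1 - 2 * b)) * (2 * b - u) / u)
    + ((2 - 2 * b - 2 * u) - (1 - 2 * b)) * (2 * b - (2 - 2 * b - 2 * u)) / (2 - 2 * b - 2 * u).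
Proof. move=> *; eapply (ID_IIa2 FthR HcR); eauto. Qed.
Lemma M_IIa3 (b u : R) : 1 - b <> 0 -> u <> 0 ->
  phi1 (alt b u) (- k b) (K2a b) u = phi1 (al3 b) (- (3 * k b)) (K1b b) u.
Proof. move=> *; eapply (ID_IIa3 FthR HcR); eauto. Qed.
Lemma M_IIb1 (b u t : R) : 1 - b <> 0 -> u <> 0 -> t <> 0 -> ww b - u <> 0 ->
  1 + 2 * b - (1 - 2 * b) / (1 - b) * (u - b) - 2 * (1 - 2 * b) * b * (2 / u + 1 / t)
  = phi2 (al1 b) (- k b) (K1a b) (K2a b) (ww b) u + (K2a b / (ww b - u) - K2a b / t).
Proof. move=> *; eapply (ID_IIb1 FthR HcR); eauto. Qed.
Lemma M_IIb2 (b u t : R) : 1 - b <> 0 -> u <> 0 -> t <> 0 ->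
  1 + 2 * b - (1 - 2 * b) / (1 - b) * (u - b) - 2 * (1 - 2 * b) * b * (2 / u + 1 / t)
  = phi1 (al1 b) (- k b) (K1b b) u + (K2a b / u - K2a b / t).
Proof. move=> *; eapply (ID_IIb2 FthR HcR); eauto. Qed.
Lemma M_c1 (b : R) : 1 - b <> 0 -> 1 - 2 * b <> 0 -> 29 - 75 * b <> 0 ->
  cc b - b / (1 - b) = (1 - 3 * b) * (200 * b * b - 233 * b + 56) / ((1 - 2 * b) * (29 - 75 * b) * (1 - b)).
Proof. move=> *; eapply (ID_c1 FthR HcR); eauto. Qed.
Lemma M_c2 (b : R) : 1 - 2 * b <> 0 -> 29 - 75 * b <> 0 ->
  1 - cc b = 3 * (4 * b - 1) * (9 - 25 * b) / ((1 - 2 * b) * (29 - 75 * b)).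
Proof. move=> *; eapply (ID_c2 FthR HcR); eauto. Qed.
Lemma M_c3 (b : R) : (9:R) <> 0 ->
  200 * b * b - 233 * b + 56 = (5 + (1 - 3 * b) * (499 - 600 * b)) / 9.
Proof. move=> *; eapply (ID_c3 FthR HcR); eauto. Qed.
Lemma M_b (b : R) : b = ((4 * b - 1) + 1) / 4.
Proof. move=> *; eapply (L_b FthR HcR); eauto. Qed.
Lemma M_1b (b : R) : 1 - b = ((1 - 3 * b) + 2) / 3.
Proof. move=> *; eapply (L_1b FthR HcR); eauto. Qed.
Lemma M_12b (b : R) : 1 - 2 * b = (2 * (1 - 3 * b) + 1) / 3.
Proof. move=> *; eapply (L_12b FthR HcR); eauto. Qed.
Lemma M_23b (b : R) : 2 - 3 * b = (1 - 3 * b) + 1.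
Proof. move=> *; eapply (L_23b FthR HcR); eauto. Qed.
Lemma M_1912 (b : R) : 19 - 12 * b = 4 * (1 - 3 * b) + 15.
Proof. move=> *; eapply (L_1912 FthR HcR); eauto. Qed.
Lemma M_2975 (b : R) : 29 - 75 * b = 25 * (1 - 3 * b) + 4.
Proof. move=> *; eapply (L_2975 FthR HcR); eauto. Qed.
Lemma M_925 (b : R) : 9 - 25 * b = (25 * (1 - 3 * b) + 2) / 3.
Proof. move=> *; eapply (L_925 FthR HcR); eauto. Qed.
Lemma M_499 (b : R) : 499 - 600 * b = 200 * (1 - 3 * b) + 299.
Proof. move=> *; eapply (L_499 FthR HcR); eauto. Qed.
Lemma M_61 (b : R) : 6 * b - 1 = (3 * (4 * b - 1) + 1) / 2.
Proof. move=> *; eapply (L_61 FthR HcR); eauto. Qed.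
Lemma M_3b (b : R) : 1 - 3 * b = (3 * (1 / 3 - b)).
Proof. move=> *; eapply (L_3b FthR HcR); eauto. Qed.
Lemma M_4b (b : R) : 4 * b - 1 = (4 * (b - 1 / 4)).
Proof. move=> *; eapply (L_4b FthR HcR); eauto. Qed.
Lemma M_mb (b : R) : (1 - 2 * b) - b = 1 - 3 * b.
Proof. move=> *; eapply (L_mb FthR HcR); eauto. Qed.
Lemma M_i (b u t : R) : (2 * u + t - 2 + 3 * b) - u = t - (2 - 3 * b - u).
Proof. move=> *; eapply (L_i FthR HcR); eauto. Qed.
Lemma M_iii (b u t : R) : (2 * u + t - 2 + 3 * b) - b = t - (2 - 2 * b - 2 * u).
Proof. move=> *; eapply (L_iii FthR HcR); eauto. Qed.
Lemma M_iv (b u : R) : (2 - 3 * b) / 2 - u = ((2 - 3 * b - u) - u) / 2.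
Proof. move=> *; eapply (L_iv FthR HcR); eauto. Qed.
Lemma M_v (b u : R) : 2 * b - u = ((2 - 2 * b - 2 * u) - u) / 3 + 2 * (4 * b - 1) / 3.
Proof. move=> *; eapply (L_v FthR HcR); eauto. Qed.
Lemma M_vi (b u : R) : 2 * b - (2 - 2 * b - 2 * u) = 2 * (u - (1 - 2 * b)).
Proof. move=> *; eapply (L_vi FthR HcR); eauto. Qed.
Lemma M_viii (b u : R) : u - (2 - 2 * b) / 3 = (u - (2 - 2 * b - 2 * u)) / 3.
Proof. move=> *; eapply (L_viii FthR HcR); eauto. Qed.
Lemma M_x (b : R) : (2 - 3 * b) / 2 - (1 - 2 * b) = b / 2.
Proof. move=> *; eapply (L_x FthR HcR); eauto. Qed.
Lemma M_xi (b : R) : (2 - 3 * b) - (2 - 3 * b) / 2 = (2 - 3 * b) / 2.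
Proof. move=> *; eapply (L_xi FthR HcR); eauto. Qed.
Lemma M_xii (b : R) : (2 - 3 * b) / 2 - (2 - 2 * b) / 3 = (5 * (1 - 3 * b) + 1) / 18.
Proof. move=> *; eapply (L_xii FthR HcR); eauto. Qed.
Lemma M_xiii (b : R) : 1 - (2 - 3 * b) / 2 = 3 * b / 2.
Proof. move=> *; eapply (L_xiii FthR HcR); eauto. Qed.
Lemma M_t1 (x1 x2 x3 : R) : (x2 + x3 - x1) - x1 = (x2 - x1) + (x3 - x1).
Proof. move=> *; eapply (L_t1 FthR HcR); eauto. Qed.
Lemma M_t2 (x1 x2 x3 : R) : (x2 + x3 - x1) - x2 = x3 - x1.
Proof. move=> *; eapply (L_t2 FthR HcR); eauto. Qed.
Lemma M_P (b x1 x2 x3 : R) : 2 * x1 + (x2 + x3 - x1) - 2 + 3 * b = x1 + x2 + x3 - 2 + 3 * b.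
Proof. move=> *; eapply (L_P FthR HcR); eauto. Qed.
Lemma M_tb (b x1 x2 x3 : R) : 2 * b - (x2 + x3 - x1) = (b - (x1 + x2 + x3 - 2 + 3 * b)) + 2 * (x1 - (1 - 2 * b)).
Proof. move=> *; eapply (L_tb FthR HcR); eauto. Qed.
Lemma M_w2 (b u : R) : (2 - 3 * b) - u = (2 - 3 * b - u).
Proof. move=> *; eapply (L_w2 FthR HcR); eauto. Qed.

Lemma nz (x : R) : 0 < x -> x <> 0.
Proof. by move=> /lt0r_neq0 /eqP. Qed.

Lemma chord2 (a l K1 K2 w p q u : R) : 0 < p -> p <= u -> u <= q -> q < w -> 0 <= K1 -> 0 <= K2 ->
  0 <= a + l * p - K1 / p - K2 / (w - p) -> 0 <= a + l * q - K1 / q - K2 / (w - q) ->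
  0 <= a + l * u - K1 / u - K2 / (w - u).
Proof.
move=> p0 pu uq qw K10 K20 hp hq.
have u0 : 0 < u by apply: lt_le_trans pu.
have q0 : 0 < q by apply: lt_le_trans uq.
have wp : 0 < w - p by rewrite subr_gt0 (le_lt_trans _ qw) // (le_trans pu uq).
have wq : 0 < w - q by rewrite subr_gt0.
have wu : 0 < w - u by rewrite subr_gt0 (le_lt_trans uq qw).
case: (ltrP p q) => [pq|qp]; last first.
  by have -> : u = p by apply/le_anti; rewrite pu (le_trans uq qp).
have : 0 <= (q - p) * (a + l * u - K1 / u - K2 / (w - u)).
  rewrite (M_chord a l K1 K2 (nz p0) (nz q0) (nz u0) (nz wp) (nz wq) (nz wu)).
  have qu : 0 <= q - u by rewrite subr_ge0.
  have up : 0 <= u - p by rewrite subr_ge0.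
  have qp : 0 <= q - p by rewrite subr_ge0 ltW.
  repeat apply: addr_ge0; try apply: mulr_ge0 => //.
  - apply: divr_ge0; first by repeat apply: mulr_ge0.
    by repeat apply: mulr_ge0; apply: ltW.
  - apply: divr_ge0; first by repeat apply: mulr_ge0.
    by repeat apply: mulr_ge0; apply: ltW.
by rewrite pmulr_rge0 // subr_gt0.
Qed.


Lemma idle (x y E : R) : y - x = E -> 0 <= E -> x <= y.
Proof. by move=> h hE; rewrite -subr_ge0 h. Qed.
Lemma idlt (x y E : R) : y - x = E -> 0 < E -> x < y.
Proof. by move=> h hE; rewrite -subr_gt0 h. Qed.
Lemma idge (x E : R) : x = E -> 0 <= E -> 0 <= x.
Proof. by move=> ->. Qed.
Lemma idgt (x E : R) : x = E -> 0 < E -> 0 < x.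
Proof. by move=> ->. Qed.

Lemma M_22b (b : R) : 2 - 2 * b = (1 - 2 * b) + 1.
Proof. move=> *; eapply (L_22b FthR HcR); eauto. Qed.
Lemma M_tm (b c a mn A R3 Rr : R) :
  1 + 3 * b + c * (a - mn) - a - 2 * (1 - 2 * b) * b * R3
  = (1 + 3 * b + c * (A - b) - A - 2 * (1 - 2 * b) * b * Rr)
    + ((c * (a - mn) - a) - (c * (A - b) - A)) + 2 * (1 - 2 * b) * b * (Rr - R3).
Proof. move=> *; eapply (L_tm FthR HcR); eauto. Qed.
Lemma M_g (b c a A : R) : c * (a - b) - a - (c * (A - b) - A) = (1 - c) * (A - a).
Proof. move=> *; eapply (L_g FthR HcR); eauto. Qed.
Lemma M_g2 (b c a A : R) : c * (a - a) - a - (c * (A - b) - A) = (1 - c) * (A - b) + (b - a).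
Proof. move=> *; eapply (L_g2 FthR HcR); eauto. Qed.
Lemma M_sy (b ya yb yc x y z : R) :
  x + y + z - ya - yb - yc + 1 = x + y + z - 2 + 3 * b - (ya + yb + yc - 3 * (1 - b)).
Proof. move=> *; eapply (L_sy FthR HcR); eauto. Qed.
Lemma M_s3 (b ya yb yc : R) : ya + yb + yc - 3 * (1 - b) = (ya - (1 - b)) + (yb - (1 - b)) + (yc - (1 - b)).
Proof. move=> *; eapply (L_s3 FthR HcR); eauto. Qed.
Lemma M_xm (b ya yb : R) : (ya + yb - 1) - (1 - 2 * b) = (ya - (1 - b)) + (yb - (1 - b)).
Proof. move=> *; eapply (L_xm FthR HcR); eauto. Qed.
Lemma M_div3 (p q n : R) : n <> 0 -> p / n + q / n - 1 = (p + q - n) / n.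
Proof. move=> *; eapply (L_div3 FthR HcR); eauto. Qed.
Lemma M_div4 (pa pb pc qab qac qbc r n : R) : n <> 0 ->
  qab / n + qac / n + qbc / n - pa / n - pb / n - pc / n + 1 - r / n
  = (n + qab + qac + qbc - (pa + pb + pc + r)) / n.
Proof. move=> *; eapply (L_div4 FthR HcR); eauto. Qed.
Lemma M_fin (A C D K n k : R) : A + C - D - K * (n * k) = A + C - (K * n * k + D).
Proof. move=> *; eapply (L_fin FthR HcR); eauto. Qed.
Lemma M_2b (b : R) : (1 - b) + (1 - b) - 1 = 1 - 2 * b.
Proof. move=> *; eapply (L_2b FthR HcR); eauto. Qed.
End Real.


Section Real2.
Variable R : realFieldType.
Local Notation F := FthR.
Local Notation H := HcR.
Local Notation m b := (1 - 2 * b).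
Local Notation k b := ((1 - 2 * b) / (1 - b)).
Local Notation K1a b := (4 * (1 - 2 * b) * b).
Local Notation K2a b := (2 * (1 - 2 * b) * b).
Local Notation K1b b := (6 * (1 - 2 * b) * b).
Local Notation al1 b := (1 + 2 * b + (1 - 2 * b) / (1 - b) * b).
Local Notation al3 b := (1 + 2 * b + (1 - 2 * b) / (1 - b) * (2 - 2 * b)).
Local Notation alt b u := (1 + 2 * b - (1 - 2 * b) / (1 - b) * (2 * u - 2 + 2 * b) - 4 * (1 - 2 * b) * b / u).
Local Notation ww b := (2 - 3 * b).
Local Notation qq b := ((2 - 3 * b) / 2).
Local Notation VV b := (b * (3 + (4 * b - 1) * (19 - 12 * b)) / (16 * (1 - b) * (2 - 3 * b))).
Local Notation phi1 a l K u := (a + l * u - K / u).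
Local Notation phi2 a l K1 K2 w u := (a + l * u - K1 / u - K2 / (w - u)).
Local Notation cc b := (2 / (1 - 2 * b) * (1 - 3 * b + (4 * b - 1) / (29 - 75 * b))).
Lemma chord1 (a l K p q u : R) : 0 < p -> p <= u -> u <= q -> 0 <= K ->
  0 <= phi1 a l K p -> 0 <= phi1 a l K q -> 0 <= phi1 a l K u.
Proof.
move=> p0 pu uq K0 hp hq.
have u0 : 0 < u by apply: lt_le_trans pu.
have q0 : 0 < q by apply: lt_le_trans uq.
case: (ltrP p q) => [pq|qp]; last first.
  by have -> : u = p by apply/le_anti; rewrite pu (le_trans uq qp).
have : 0 <= (q - p) * phi1 a l K u.
  rewrite (M_chord1 a l K (nz p0) (nz q0) (nz u0)).
  have qu : 0 <= q - u by rewrite subr_ge0.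
  have up : 0 <= u - p by rewrite subr_ge0.
  have qp : 0 <= q - p by rewrite subr_ge0 ltW.
  repeat apply: addr_ge0; try apply: mulr_ge0 => //.
  apply: divr_ge0; first by repeat apply: mulr_ge0.
  by repeat apply: mulr_ge0; apply: ltW.
by rewrite pmulr_rge0 // subr_gt0.
Qed.

Lemma recip (K x y : R) : 0 <= K -> 0 < x -> x <= y -> 0 <= K / x - K / y.
Proof.
move=> K0 x0 xy; rewrite subr_ge0; apply: ler_wpM2l => //.
by rewrite lef_pV2 // posrE (lt_le_trans x0 xy).
Qed.

Section B.
Variable b : R.
Hypothesis hb1 : 1 / 4 <= b.
Hypothesis hb2 : b < 1 / 3.

Lemma b4 : 0 <= 4 * b - 1.
Proof using hb1 hb2. rewrite (M_4b b); apply: mulr_ge0 => //; by rewrite subr_ge0. Qed.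
Lemma b3 : 0 < 1 - 3 * b.
Proof using hb1 hb2. rewrite (M_3b b); apply: mulr_gt0 => //; by rewrite subr_gt0. Qed.
Lemma bpos : 0 < b.
Proof using hb1 hb2. rewrite (M_b b); apply: divr_gt0 => //; apply: le_lt_trans b4 _; by rewrite ltrDl. Qed.
Lemma b1 : 0 < 1 - b.
Proof using hb1 hb2. rewrite (M_1b b); apply: divr_gt0 => //; apply: lt_le_trans b3 _; by rewrite lerDl. Qed.
Lemma bm : 0 < 1 - 2 * b.
Proof using hb1 hb2. rewrite (M_12b b); apply: divr_gt0 => //; apply: addr_gt0 => //; apply: mulr_gt0 => //; exact: b3. Qed.
Lemma bw : 0 < 2 - 3 * b.
Proof using hb1 hb2. rewrite (M_23b b); apply: addr_gt0 => //; exact: b3. Qed.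
Lemma bmb : b < 1 - 2 * b.
Proof using hb1 hb2. rewrite -subr_gt0 (M_mb b); exact: b3. Qed.
Lemma bk : 0 < k b.
Proof using hb1 hb2. apply: divr_gt0; [exact: bm | exact: b1]. Qed.

Lemma VVpos : 0 <= VV b.
Proof using hb1 hb2.
apply: divr_ge0.
  apply: mulr_ge0; first exact: ltW bpos.
  apply: addr_ge0 => //; apply: mulr_ge0; first exact: b4.
  rewrite (M_1912 b); apply: addr_ge0 => //; apply: mulr_ge0 => //; exact: ltW b3.
apply: mulr_ge0; last exact: ltW bw.
apply: mulr_ge0 => //; exact: ltW b1.
Qed.


Lemma qpos : 0 < qq b.
Proof using hb1 hb2. apply: divr_gt0 => //; exact: bw. Qed.
Lemma mq : 1 - 2 * b < qq b.
Proof using hb1 hb2. apply: (idlt (M_x b)); apply: divr_gt0 => //; exact: bpos. Qed.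
Lemma qw : qq b < ww b.
Proof using hb1 hb2. apply: (idlt (M_xi b)); exact: qpos. Qed.
Lemma K1a0 : 0 <= K1a b.
Proof using hb1 hb2. apply: mulr_ge0; [apply: mulr_ge0 => //; exact: ltW bm | exact: ltW bpos]. Qed.
Lemma K2a0 : 0 <= K2a b.
Proof using hb1 hb2. apply: mulr_ge0; [apply: mulr_ge0 => //; exact: ltW bm | exact: ltW bpos]. Qed.
Lemma K1b0 : 0 <= K1b b.
Proof using hb1 hb2. apply: mulr_ge0; [apply: mulr_ge0 => //; exact: ltW bm | exact: ltW bpos]. Qed.

Lemma F1pos u : 1 - 2 * b <= u -> u <= qq b ->
  0 <= phi2 (al1 b) (- k b) (K1a b) (K2a b) (ww b) u.
Proof using hb1 hb2.
move=> hu uq.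
have hwm : 0 < ww b - (1 - 2 * b) by rewrite subr_gt0 (lt_trans mq qw).
have hwq : 0 < ww b - qq b by rewrite subr_gt0 qw.
apply: (@chord2 _ _ _ _ _ _ (1 - 2 * b) (qq b) u) => //; first exact: bm.
- exact: qw.
- exact: K1a0.
- exact: K2a0.
- by rewrite (M_F1m (nz b1) (nz bm) (nz hwm)).
- by rewrite (M_F1q (nz b1) (nz (ltr0Sn _ 1)) (nz bw) (nz hwq)); exact: VVpos.
Qed.

Lemma F2pos u : qq b <= u -> u <= 1 ->
  0 <= phi1 (al1 b) (- k b) (K1b b) u.
Proof using hb1 hb2.
move=> qu u1.
apply: (@chord1 _ _ _ (qq b) 1 u) => //; first exact: qpos.
- exact: K1b0.
- by rewrite (M_F2p (nz b1) (nz (ltr0Sn _ 1)) (nz bw)); exact: VVpos.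
- rewrite (M_F2q (nz b1)); apply: mulr_ge0; first by apply: mulr_ge0 => //; exact: ltW bpos.
  rewrite (M_61 b); apply: divr_ge0 => //; apply: addr_ge0 => //; apply: mulr_ge0 => //; exact: b4.
Qed.

Lemma F3pos u : (2 - 2 * b) / 3 <= u -> u <= qq b ->
  0 <= phi1 (al3 b) (- (3 * k b)) (K1b b) u.
Proof using hb1 hb2.
move=> pu uq.
have h22 : 0 < 2 - 2 * b by rewrite (M_22b b); apply: addr_gt0 => //; exact: bm.
apply: (@chord1 _ _ _ ((2 - 2 * b) / 3) (qq b) u) => //.
- by apply: divr_gt0.
- exact: K1b0.
- rewrite (M_F3p (nz b1) (nz (ltr0Sn _ 2)) (nz h22)).
  apply: divr_ge0; [apply: mulr_ge0; exact: b4 | exact: ltW b1].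
- by rewrite (M_F3q (nz b1) (nz (ltr0Sn _ 1)) (nz bw)); exact: VVpos.
Qed.

Lemma caseII u t A : 1 - 2 * b <= u -> u <= t -> u <= 1 -> b < 2 * u + t - 2 + 3 * b ->
  (A = u /\ u <= 2 * u + t - 2 + 3 * b) \/ (A = 2 * u + t - 2 + 3 * b /\ 2 * u + t - 2 + 3 * b <= u) ->
  0 <= 1 + 2 * b - k b * (A - b) - 2 * (1 - 2 * b) * b * (2 / u + 1 / t).
Proof using hb1 hb2.
move=> hu ut u1 hP hA.
have u0 : 0 < u by apply: lt_le_trans hu; exact: bm.
have t0 : 0 < t by apply: lt_le_trans ut.
case: hA => [[-> uP]|[-> Pu]].
- have htw : ww b - u <= t.
    by rewrite -subr_ge0 -(M_i b u t) subr_ge0.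
  case: (lerP u (qq b)) => [uq|qu].
  + have hwu : 0 < ww b - u by rewrite subr_gt0 (le_lt_trans uq qw).
    rewrite (M_IIb1 (nz b1) (nz u0) (nz t0) (nz hwu)).
    apply: addr_ge0; first exact: F1pos.
    apply: recip => //; exact: K2a0.
  + rewrite (M_IIb2 (nz b1) (nz u0) (nz t0)).
    apply: addr_ge0; first by apply: F2pos => //; exact: ltW.
    apply: recip => //; exact: K2a0.
- rewrite (M_IIa (nz b1) (nz u0) (nz t0)).
  have htw : t <= ww b - u.
    by rewrite -subr_le0 -(M_i b u t) subr_le0.
  have hpt : 2 - 2 * b - 2 * u < t.
    by rewrite -subr_gt0 -(M_iii b u t) subr_gt0.
  have uq : u <= qq b.
    apply: (idle (M_iv b u)); apply: divr_ge0 => //.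
    by rewrite subr_ge0 (le_trans ut htw).
  have hwu : 0 < ww b - u by apply: lt_le_trans htw.
  case: (lerP u (2 - 2 * b - 2 * u)) => [up|pu].
  + have p0 : 0 < 2 - 2 * b - 2 * u by apply: lt_le_trans up.
    apply: (@chord1 _ _ _ (2 - 2 * b - 2 * u) (ww b - u) t) => //.
    * exact: ltW.
    * exact: K2a0.
    * rewrite (M_IIa2 (nz b1) (nz u0) (nz p0)).
      have h2bu : 0 <= 2 * b - u.
        rewrite (M_v b u); apply: addr_ge0; apply: divr_ge0 => //.
          by rewrite subr_ge0.
        apply: mulr_ge0 => //; exact: b4.
      apply: addr_ge0; first apply: mulr_ge0 => //.
        by apply: divr_ge0; [apply: mulr_ge0; rewrite // subr_ge0 | exact: ltW].
      apply: divr_ge0; last exact: ltW.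
      apply: mulr_ge0; first by rewrite subr_ge0 (le_trans hu up).
      by rewrite (M_vi b u); apply: mulr_ge0; rewrite // subr_ge0.
    * by rewrite (M_IIa1 (nz b1) (nz u0) (nz hwu)); apply: F1pos.
  + apply: (@chord1 _ _ _ u (ww b - u) t) => //.
    * exact: K2a0.
    * rewrite (M_IIa3 (nz b1) (nz u0)); apply: F3pos => //.
      apply: (idle (M_viii b u)); apply: divr_ge0 => //.
      by rewrite subr_ge0 ltW.
    * by rewrite (M_IIa1 (nz b1) (nz u0) (nz hwu)); apply: F1pos.
Qed.

End B.
End Real2.


Section Real3.
Variable R : realFieldType.
Local Notation F := FthR.
Local Notation H := HcR.
Local Notation m b := (1 - 2 * b).
Local Notation k b := ((1 - 2 * b) / (1 - b)).
Local Notation K1a b := (4 * (1 - 2 * b) * b).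
Local Notation K2a b := (2 * (1 - 2 * b) * b).
Local Notation K1b b := (6 * (1 - 2 * b) * b).
Local Notation al1 b := (1 + 2 * b + (1 - 2 * b) / (1 - b) * b).
Local Notation al3 b := (1 + 2 * b + (1 - 2 * b) / (1 - b) * (2 - 2 * b)).
Local Notation alt b u := (1 + 2 * b - (1 - 2 * b) / (1 - b) * (2 * u - 2 + 2 * b) - 4 * (1 - 2 * b) * b / u).
Local Notation ww b := (2 - 3 * b).
Local Notation qq b := ((2 - 3 * b) / 2).
Local Notation VV b := (b * (3 + (4 * b - 1) * (19 - 12 * b)) / (16 * (1 - b) * (2 - 3 * b))).
Local Notation phi1 a l K u := (a + l * u - K / u).
Local Notation phi2 a l K1 K2 w u := (a + l * u - K1 / u - K2 / (w - u)).
Local Notation cc b := (2 / (1 - 2 * b) * (1 - 3 * b + (4 * b - 1) / (29 - 75 * b))).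
Definition mb (b x : R) := x = 1 - 2 * b \/ x = 2 * b.

Lemma prod0 (x y : R) : x * y = 0 -> x = 0 \/ y = 0.
Proof. by move/eqP; rewrite mulf_eq0 => /orP[/eqP|/eqP]; [left|right]. Qed.

Lemma sum0 (x y : R) : 0 <= x -> 0 <= y -> x + y = 0 -> x = 0 /\ y = 0.
Proof. by move=> hx hy /eqP; rewrite paddr_eq0 // => /andP[/eqP ? /eqP ?]. Qed.

Lemma root2 (b x : R) : (x - (1 - 2 * b)) * (2 * b - x) = 0 -> mb b x.
Proof.
case/prod0 => /eqP; rewrite subr_eq0 => /eqP h; [by left | by right].
Qed.

Lemma core (b c x1 x2 x3 a s : R) : 1 / 4 <= b -> b < 1 / 3 -> b / (1 - b) < c -> c <= 1 ->
  0 <= s -> 1 - 2 * b <= x1 -> x1 <= x2 -> x1 <= x3 -> x1 <= 1 -> a <= x1 ->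
  a <= x1 + x2 + x3 - 2 + 3 * b - s ->
  0 <= 1 + 3 * b + c * (a - Num.min a b) - a - 2 * (1 - 2 * b) * b * (1 / x1 + 1 / x2 + 1 / x3) /\
  (1 + 3 * b + c * (a - Num.min a b) - a - 2 * (1 - 2 * b) * b * (1 / x1 + 1 / x2 + 1 / x3) = 0 ->
   s = 0 /\ mb b x1 /\ mb b x2 /\ mb b x3).
Proof.
move=> hb1 hb2 hc1 hc2 s0 hx1 x12 x13 x11 ax1 aP.
have m0 := bm hb1 hb2.
have x10 : 0 < x1 by apply: lt_le_trans hx1.
have x20 : 0 < x2 by apply: lt_le_trans x12.
have x30 : 0 < x3 by apply: lt_le_trans x13.
set t := x2 + x3 - x1.
have tx2 : x2 <= t by apply: (idle (M_t2 x1 x2 x3)); rewrite subr_ge0.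
have tx1 : x1 <= t by apply: le_trans tx2.
have t0 : 0 < t by apply: lt_le_trans tx1.
have Dge : 0 <= 2 / x1 + 1 / t - (1 / x1 + 1 / x2 + 1 / x3).
  rewrite (M_red (nz x10) (nz x20) (nz x30) (nz t0)).
  apply: divr_ge0.
    apply: mulr_ge0; [apply: mulr_ge0; rewrite subr_ge0 // | exact: ltW (addr_gt0 x20 x30)].
  apply: ltW; repeat apply: mulr_gt0 => //.
have K0 : 0 < 2 * (1 - 2 * b) * b by apply: mulr_gt0; [apply: mulr_gt0 | exact: bpos].
set P := x1 + x2 + x3 - 2 + 3 * b.
case: (lerP P b) => [Pb|bP].
-
  have ab : a <= b by apply: le_trans aP (le_trans _ Pb); rewrite gerBl.
  rewrite min_l //.
  have tb : t <= 2 * b.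
    apply: (idle (M_tb b x1 x2 x3)); apply: addr_ge0; first by rewrite subr_ge0.
    by apply: mulr_ge0 => //; rewrite subr_ge0.
  rewrite (M_caseI b c s a x1 x2 x3) -/t (M_caseI2 b (nz x10) (nz t0)).
  have e1 : 0 <= (P - s) - a by rewrite subr_ge0.
  have e2 : 0 <= 2 * ((x1 - (1 - 2 * b)) * (2 * b - x1) / x1).
    apply: mulr_ge0 => //; apply: divr_ge0; last exact: ltW.
    by apply: mulr_ge0; rewrite subr_ge0 // (le_trans tx1 tb).
  have e3 : 0 <= (t - (1 - 2 * b)) * (2 * b - t) / t.
    apply: divr_ge0; last exact: ltW.
    by apply: mulr_ge0; rewrite subr_ge0 // (le_trans hx1 tx1).
  have e4 : 0 <= 2 * (1 - 2 * b) * b * (2 / x1 + 1 / t - (1 / x1 + 1 / x2 + 1 / x3)).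
    by apply: mulr_ge0 => //; exact: ltW.
  split; first exact: (addr_ge0 (addr_ge0 (addr_ge0 s0 e1) (addr_ge0 e2 e3)) e4).
  move=> h0.
  have [h123 h4] := sum0 (addr_ge0 (addr_ge0 s0 e1) (addr_ge0 e2 e3)) e4 h0.
  have [h12 h3] := sum0 (addr_ge0 s0 e1) (addr_ge0 e2 e3) h123.
  have [hs _] := sum0 s0 e1 h12.
  have [h2 h3'] := sum0 e2 e3 h3.
  have mx1 : mb b x1.
    case/prod0: h2 => [/eqP|]; first by rewrite pnatr_eq0.
    move=> /eqP; rewrite mulf_eq0 invr_eq0 (negbTE (lt0r_neq0 x10)) orbF => /eqP.
    exact: root2.
  have mt : mb b t.
    move/eqP: h3'; rewrite mulf_eq0 invr_eq0 (negbTE (lt0r_neq0 t0)) orbF => /eqP.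
    exact: root2.
  case/prod0: h4 => [/eqP|]; first by rewrite (negbTE (lt0r_neq0 K0)).
  rewrite (M_red (nz x10) (nz x20) (nz x30) (nz t0)) => /eqP.
  rewrite mulf_eq0 invr_eq0 !mulf_eq0 (negbTE (lt0r_neq0 x10)) (negbTE (lt0r_neq0 x20))
    (negbTE (lt0r_neq0 x30)) (negbTE (lt0r_neq0 t0)) (negbTE (lt0r_neq0 (addr_gt0 x20 x30))) !orbF.
  rewrite !subr_eq0 => /orP[/eqP e|/eqP e].
  + have et : t = x3 by rewrite /t e addrC addKr.
    by split; [exact: hs | split; [exact: mx1 | split; [rewrite e | rewrite -et]]].
  + have et : t = x2 by rewrite /t e addrK.
    by split; [exact: hs | split; [exact: mx1 | split; [rewrite -et | rewrite e]]].
-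
  have bx1 : b < x1 by apply: lt_le_trans (bmb hb1 hb2) hx1.
  have hPt : 2 * x1 + t - 2 + 3 * b = P by rewrite /t (M_P b x1 x2 x3).
  have [A [hA aA bA]] : exists A, [/\ (A = x1 /\ x1 <= P) \/ (A = P /\ P <= x1), a <= A & b < A].
    case: (lerP x1 P) => [x1P|Px1].
      by exists x1; split => //; left.
    exists P; split => //; first by right; split => //; exact: ltW.
    by apply: le_trans aP _; rewrite gerBl.
  have H0 : 0 <= 1 + 2 * b - k b * (A - b) - 2 * (1 - 2 * b) * b * (2 / x1 + 1 / t).
    apply: (caseII hb1 hb2 hx1 tx1 x11); rewrite hPt //.
  have Hgt : 0 < 1 + 3 * b + c * (a - Num.min a b) - a - 2 * (1 - 2 * b) * b * (1 / x1 + 1 / x2 + 1 / x3).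
    rewrite (M_tm b c a (Num.min a b) A (1 / x1 + 1 / x2 + 1 / x3) (2 / x1 + 1 / t)).
    rewrite (M_k c A _ (nz (b1 hb1 hb2))).
    apply: ltr_wpDr; first by apply: mulr_ge0 => //; exact: ltW.
    apply: ltr_wpDr.
    - case: (lerP a b) => [ab|ba].
        rewrite (M_g2 b c a A); apply: addr_ge0; last by rewrite subr_ge0.
        by apply: mulr_ge0; rewrite subr_ge0 // ltW.
      rewrite (M_g b c a A).
      by apply: mulr_ge0; rewrite subr_ge0.
    - apply: ltr_wpDl => //.
      by apply: mulr_gt0; rewrite subr_gt0.
  split; first exact: ltW.
  by move=> h; rewrite h ltxx in Hgt.
Qed.

End Real3.


Section Real4.
Variable R : realFieldType.
Local Notation F := FthR.
Local Notation H := HcR.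
Local Notation m b := (1 - 2 * b).
Local Notation k b := ((1 - 2 * b) / (1 - b)).
Local Notation K1a b := (4 * (1 - 2 * b) * b).
Local Notation K2a b := (2 * (1 - 2 * b) * b).
Local Notation K1b b := (6 * (1 - 2 * b) * b).
Local Notation al1 b := (1 + 2 * b + (1 - 2 * b) / (1 - b) * b).
Local Notation al3 b := (1 + 2 * b + (1 - 2 * b) / (1 - b) * (2 - 2 * b)).
Local Notation alt b u := (1 + 2 * b - (1 - 2 * b) / (1 - b) * (2 * u - 2 + 2 * b) - 4 * (1 - 2 * b) * b / u).
Local Notation ww b := (2 - 3 * b).
Local Notation qq b := ((2 - 3 * b) / 2).
Local Notation VV b := (b * (3 + (4 * b - 1) * (19 - 12 * b)) / (16 * (1 - b) * (2 - 3 * b))).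
Local Notation phi1 a l K u := (a + l * u - K / u).
Local Notation phi2 a l K1 K2 w u := (a + l * u - K1 / u - K2 / (w - u)).
Local Notation cc b := (2 / (1 - 2 * b) * (1 - 3 * b + (4 * b - 1) / (29 - 75 * b))).
Lemma tri (b c ya yb yc xab xac xbc a : R) :
  1 / 4 <= b -> b < 1 / 3 -> b / (1 - b) < c -> c <= 1 ->
  1 - b <= ya -> 1 - b <= yb -> 1 - b <= yc ->
  ya + yb - 1 <= xab -> ya + yc - 1 <= xac -> yb + yc - 1 <= xbc ->
  xab <= 1 -> xac <= 1 -> xbc <= 1 ->
  a <= xab -> a <= xac -> a <= xbc ->
  a <= xab + xac + xbc - ya - yb - yc + 1 ->
  0 <= 1 + 3 * b + c * (a - Num.min a b) - a - 2 * (1 - 2 * b) * b * (1 / xab + 1 / xac + 1 / xbc) /\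
  (1 + 3 * b + c * (a - Num.min a b) - a - 2 * (1 - 2 * b) * b * (1 / xab + 1 / xac + 1 / xbc) = 0 ->
   [/\ ya = 1 - b, yb = 1 - b, yc = 1 - b & mb b xab /\ mb b xac /\ mb b xbc]).
Proof.
move=> hb1 hb2 hc1 hc2 ha hb hc eab eac ebc ab1 ac1 bc1 aab aac abc aP.
set s := ya + yb + yc - 3 * (1 - b).
have da : 0 <= ya - (1 - b) by rewrite subr_ge0.
have db : 0 <= yb - (1 - b) by rewrite subr_ge0.
have dc : 0 <= yc - (1 - b) by rewrite subr_ge0.
have s0 : 0 <= s by rewrite /s (M_s3 b); exact: addr_ge0 (addr_ge0 da db) dc.
have mab : 1 - 2 * b <= xab.
  by apply: le_trans eab; apply: (idle (M_xm b ya yb)); apply: addr_ge0.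
have mac : 1 - 2 * b <= xac.
  by apply: le_trans eac; apply: (idle (M_xm b ya yc)); apply: addr_ge0.
have mbc : 1 - 2 * b <= xbc.
  by apply: le_trans ebc; apply: (idle (M_xm b yb yc)); apply: addr_ge0.
move: aP; rewrite (M_sy b ya yb yc xab xac xbc) -/s => aP.
set T := 1 + 3 * b + c * (a - Num.min a b) - a - 2 * (1 - 2 * b) * b * (1 / xab + 1 / xac + 1 / xbc).
have ys : s = 0 -> [/\ ya = 1 - b, yb = 1 - b & yc = 1 - b].
  rewrite /s (M_s3 b) => h.
  have [h12 h3] := sum0 (addr_ge0 da db) dc h.
  have [h1 h2] := sum0 da db h12.
  by split; apply/eqP; rewrite -subr_eq0; apply/eqP.
have gen : forall x1 x2 x3, x1 <= x2 -> x1 <= x3 -> 1 - 2 * b <= x1 -> x1 <= 1 -> a <= x1 ->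
    a <= x1 + x2 + x3 - 2 + 3 * b - s ->
    1 / x1 + 1 / x2 + 1 / x3 = 1 / xab + 1 / xac + 1 / xbc ->
    (mb b x1 /\ mb b x2 /\ mb b x3 -> mb b xab /\ mb b xac /\ mb b xbc) ->
    0 <= T /\ (T = 0 -> [/\ ya = 1 - b, yb = 1 - b, yc = 1 - b & mb b xab /\ mb b xac /\ mb b xbc]).
  move=> x1 x2 x3 h12 h13 hm h1 ha1 hP hR hmb.
  have [Hge Heq] := core hb1 hb2 hc1 hc2 s0 hm h12 h13 h1 ha1 hP.
  rewrite /T -hR; split => // /Heq [/ys [? ? ?] hx].
  by split => //; apply: hmb.
case: (lerP xab xac) => h1; case: (lerP xab xbc) => h2.
- by apply: (gen xab xac xbc).
- apply: (gen xbc xab xac) => //; try exact: ltW.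
  + exact: le_trans (ltW h2) h1.
  + by have -> : xbc + xab + xac = xab + xac + xbc by rewrite [RHS]addrC addrA.
  + by rewrite [RHS]addrC addrA.
  + by case=> [? [? ?]].
- case: (lerP xac xbc) => h3.
  + apply: (gen xac xab xbc) => //; try exact: ltW.
    * by rewrite (addrC xac).
    * by rewrite (addrC (1 / xac)).
    * by case=> [? [? ?]].
  + apply: (gen xbc xab xac) => //; try exact: ltW.
    * exact: le_trans (ltW h3) (ltW h1).
    * by have -> : xbc + xab + xac = xab + xac + xbc by rewrite [RHS]addrC addrA.
    * by rewrite [RHS]addrC addrA.
    * by case=> [? [? ?]].
- case: (lerP xac xbc) => h3.
  + apply: (gen xac xab xbc) => //; try exact: ltW.
    * by rewrite (addrC xac).
    * by rewrite (addrC (1 / xac)).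
    * by case=> [? [? ?]].
  + apply: (gen xbc xab xac) => //; try exact: ltW.
    * by have -> : xbc + xab + xac = xab + xac + xbc by rewrite [RHS]addrC addrA.
    * by rewrite [RHS]addrC addrA.
    * by case=> [? [? ?]].
Qed.


Lemma cfacts (b : R) : 1 / 4 <= b -> b < 1 / 3 -> b / (1 - b) < cc b /\ cc b <= 1.
Proof.
move=> hb1 hb2.
have h3 := b3 hb1 hb2.
have h29 : 0 < 29 - 75 * b.
  by rewrite (M_2975 b); apply: addr_gt0 => //; apply: mulr_gt0.
have hm := bm hb1 hb2.
have h1 := b1 hb1 hb2.
split.
- rewrite -subr_gt0 (M_c1 (nz h1) (nz hm) (nz h29)).
  apply: divr_gt0; last by repeat apply: mulr_gt0.
  apply: mulr_gt0 => //; rewrite (M_c3 b (nz (ltr0Sn _ 8))).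
  apply: divr_gt0 => //; apply: addr_gt0 => //; apply: mulr_gt0 => //.
  by rewrite (M_499 b); apply: addr_gt0 => //; apply: mulr_gt0.
- rewrite -subr_ge0 (M_c2 (nz hm) (nz h29)).
  apply: divr_ge0; last by apply: ltW; apply: mulr_gt0.
  apply: mulr_ge0; first by apply: mulr_ge0 => //; exact: b4.
  rewrite (M_925 b); apply: divr_ge0 => //; apply: addr_ge0 => //.
  by apply: mulr_ge0 => //; exact: ltW.
Qed.

End Real4.


Local Close Scope ring_scope.

Section G.
Variables (V : finType) (e : rel V).
Hypothesis esym : symmetric e.
Hypothesis eirr : irreflexive e.

Definition Nb (x : V) : {set V} := [set y | e x y].

Lemma cliqueP (S : {set V}) :
  reflect (forall x y, x \in S -> y \in S -> x != y -> e x y) (is_clique e S).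
Proof.
apply: (iffP forallP) => [h x y xS yS nxy | h x].
  by move: (h x) => /implyP/(_ xS)/forallP/(_ y)/implyP/(_ yS)/implyP/(_ nxy).
apply/implyP => xS; apply/forallP => y; apply/implyP => yS; apply/implyP => nxy.
exact: h.
Qed.

Lemma cdegE (T : {set V}) : is_clique e T ->
  cdeg e T = #|[set v | [forall x in T, e x v]]|.
Proof.
move=> cT; rewrite /cdeg.
set C := [set v | [forall x in T, e x v]].
have notT v : v \in C -> v \notin T.
  rewrite inE => /forallP h; apply/negP => vT.
  by move: (h v); rewrite vT /= eirr.
have -> : [set S in cliques e #|T|.+1 | T \subset S] = (fun v => v |: T) @: C.
  apply/setP => S; rewrite !inE; apply/idP/imsetP.
  - case/andP => /andP [cS /eqP cardS] TS.
    have : #|S :\: T| == 1 by rewrite cardsD (setIidPr TS) cardS subSnn.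
    case/cards1P => v hv.
    have : v \in S :\: T by rewrite hv set11.
    rewrite !inE => /andP [vT vS].
    have vC : v \in C.
      rewrite inE; apply/forallP => x; apply/implyP => xT.
      move/cliqueP: cS => cS; apply: cS => //; first exact: (subsetP TS).
      by apply/eqP => exv; rewrite -exv xT in vT.
    exists v => //; apply/setP => x; rewrite !inE.
    case: (boolP (x \in T)) => xT; first by rewrite orbT (subsetP TS).
    rewrite orbF; apply/idP/idP => [xS|/eqP ->//].
    have : x \in S :\: T by rewrite !inE xT.
    by rewrite hv inE.
  - case=> v vC ->.
    have vT := notT v vC.
    move: vC; rewrite inE => /forallP hv.
    rewrite cardsU1 vT subsetUr andbT /= add1n eqxx andbT.
    apply/cliqueP => x y; rewrite !inE => /orP[/eqP->|xT] /orP[/eqP->|yT] nxy.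
    + by rewrite eqxx in nxy.
    + by rewrite esym; move: (hv y) => /implyP/(_ yT).
    + by move: (hv x) => /implyP/(_ xT).
    + by move/cliqueP: cT; apply.
rewrite card_in_imset //.
move=> v w vC wC hvw.
have : v \in w |: T by rewrite -hvw setU11.
rewrite !inE => /orP[/eqP -> //|vT].
by move: (notT v vC); rewrite vT.
Qed.


Lemma clique2 a b : e a b -> is_clique e [set a; b].
Proof.
move=> hab; apply/cliqueP => x y; rewrite !inE.
by case/orP=> /eqP-> /orP[]/eqP->; rewrite ?eqxx // => _; rewrite esym.
Qed.

Lemma clique3 a b c : e a b -> e a c -> e b c -> is_clique e [set a; b; c].
Proof.
move=> hab hac hbc; apply/cliqueP => x y; rewrite !inE.
by case/orP=> [/orP[]|] /eqP-> /orP[/orP[]|] /eqP->; rewrite ?eqxx // => _; rewrite esym.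
Qed.

Lemma cdeg2 a b : e a b -> cdeg e [set a; b] = #|Nb a :&: Nb b|.
Proof.
move=> hab; rewrite cdegE ?clique2 //; apply: eq_card => v; rewrite !inE.
apply/forallP/andP => [h|[ha hb] x].
  by split; [move: (h a) | move: (h b)]; rewrite !inE eqxx ?orbT.
by rewrite !inE; apply/implyP => /orP[]/eqP->.
Qed.

Lemma cdeg3 a b c : e a b -> e a c -> e b c ->
  cdeg e [set a; b; c] = #|Nb a :&: Nb b :&: Nb c|.
Proof.
move=> hab hac hbc; rewrite cdegE ?clique3 //; apply: eq_card => v; rewrite !inE.
apply/forallP/andP => [h|[/andP[ha hb] hc] x].
  by split; [apply/andP; split; [move: (h a) | move: (h b)] | move: (h c)]; rewrite !inE eqxx ?orbT.
by rewrite !inE; apply/implyP => /orP[/orP[]|]/eqP->.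
Qed.

Lemma card2 (a b : V) : a != b -> #|[set a; b]| = 2.
Proof. by move=> hab; rewrite cards2 hab. Qed.

Lemma card3 (a b c : V) : a != b -> a != c -> b != c -> #|[set a; b; c]| = 3.
Proof.
move=> hab hac hbc.
have -> : [set a; b; c] = a |: [set b; c] by apply/setP => x; rewrite !inE orbA.
by rewrite cardsU1 card2 // !inE negb_or hab hac.
Qed.

Lemma in_K2 a b : a != b -> e a b -> [set a; b] \in cliques e 2.
Proof. by move=> hab h; rewrite inE clique2 // card2. Qed.

Lemma in_K3 a b c : a != b -> a != c -> b != c -> e a b -> e a c -> e b c ->
  [set a; b; c] \in cliques e 3.
Proof. by move=> *; rewrite inE clique3 // card3. Qed.

Lemma K2_dec E : E \in cliques e 2 -> exists a b, [/\ a != b, e a b & E = [set a; b]].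
Proof.
rewrite inE => /andP [cE /cards2P [a [b [hab hE]]]].
exists a, b; split => //; move/cliqueP: cE; apply => //; rewrite hE !inE eqxx ?orbT //.
Qed.

Lemma K3_dec T : T \in cliques e 3 -> exists a b c,
  [/\ [/\ a != b, a != c & b != c], [/\ e a b, e a c & e b c] & T = [set a; b; c]].
Proof.
rewrite inE => /andP [cT /eqP cardT].
have : 0 < #|T| by rewrite cardT.
case/card_gt0P => a aT.
have : #|T :\ a| == 2 by move: cardT; rewrite (cardsD1 a T) aT add1n => -[->].
case/cards2P => b [c [hbc hT]].
have bTa : b \in T :\ a by rewrite hT !inE eqxx.
have cTa : c \in T :\ a by rewrite hT !inE eqxx orbT.
move: (bTa) (cTa); rewrite !inE => /andP[hba bT] /andP[hca cT'].
have hab : a != b by rewrite eq_sym.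
have hac : a != c by rewrite eq_sym.
move/cliqueP: cT => cT.
exists a, b, c; split; [by [] | by split; apply: cT | ].
by rewrite -(setD1K aT) hT; apply/setP => x; rewrite !inE orbA.
Qed.

Lemma incl3 (A B C : {set V}) :
  #|A :|: B :|: C| + #|A :&: B| + #|A :&: C| + #|B :&: C| = #|A| + #|B| + #|C| + #|A :&: B :&: C|.
Proof.
have h1 := cardsUI A B.
have h2 := cardsUI (A :|: B) C.
rewrite setIUl in h2.
have h3 := cardsUI (A :&: C) (B :&: C).
have -> : A :&: B :&: C = (A :&: C) :&: (B :&: C).
  by apply/setP => x; rewrite !inE; case: (x \in A); case: (x \in B); case: (x \in C).
move: h1 h2 h3; rewrite -!plusE; lia.
Qed.

Lemma edges_eq a b c : a != b -> a != c -> b != c -> e a b -> e a c -> e b c ->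
  forall E, (E \in cliques e 2) && (E \subset [set a; b; c])
    = (E \in [set a; b] |: ([set a; c] |: [set [set b; c]])).
Proof.
move=> hab hac hbc eab eac ebc E; apply/andP/idP.
- case=> /K2_dec [x [y [hxy exy ->]]] sub.
  move: (subsetP sub x) (subsetP sub y); rewrite !inE !eqxx ?orbT => /(_ isT) hx /(_ isT) hy.
  have sw : [set y; x] = [set x; y] by rewrite setUC.
  move: hxy sw.
  by case/orP: hx => [/orP[]|] /eqP-> ; case/orP: hy => [/orP[]|] /eqP-> ;
    rewrite ?eqxx //= => _ sw; rewrite -?sw ?eqxx ?orbT.
- move=> hE; have : [|| E == [set a; b], E == [set a; c] | E == [set b; c]] by move: hE; rewrite !inE.
  case/or3P => /eqP->; (split; [apply: in_K2 => // |
    apply/subsetP => z; rewrite !inE => /orP[]/eqP->; rewrite !eqxx ?orbT //]).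
Qed.

Lemma ab_ac (a b c : V) : a != b -> a != c -> b != c -> [set a; b] != [set a; c].
Proof.
move=> hab hac hbc; apply/negP => /eqP h.
have : b \in [set a; c] by rewrite -h !inE eqxx orbT.
by rewrite !inE eq_sym (negbTE hab) (negbTE hbc).
Qed.

Lemma ab_bc (a b c : V) : a != b -> a != c -> b != c -> [set a; b] != [set b; c].
Proof.
move=> hab hac hbc; apply/negP => /eqP h.
have : a \in [set b; c] by rewrite -h !inE eqxx.
by rewrite !inE (negbTE hab) (negbTE hac).
Qed.

Lemma ac_bc (a b c : V) : a != b -> a != c -> b != c -> [set a; c] != [set b; c].
Proof.
move=> hab hac hbc; apply/negP => /eqP h.
have : a \in [set b; c] by rewrite -h !inE eqxx.
by rewrite !inE (negbTE hab) (negbTE hac).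
Qed.

Lemma card_sum (B : {set {set V}}) (P : pred {set V}) :
  #|[set S in B | P S]| = \sum_(S in B) (P S : nat).
Proof.
rewrite -sum1_card (eq_bigl (fun S => (S \in B) && P S)); last by move=> S; rewrite !inE.
by rewrite big_mkcondr; apply: eq_bigr => S _; case: (P S).
Qed.

Lemma dcount (A B : {set {set V}}) :
  \sum_(T in A) #|[set S in B | T \subset S]| = \sum_(S in B) #|[set T in A | T \subset S]|.
Proof.
under eq_bigr => T _ do rewrite card_sum.
by rewrite exchange_big; apply: eq_bigr => S _; rewrite card_sum.
Qed.

Lemma subclique (S T : {set V}) : T \subset S -> is_clique e S -> is_clique e T.
Proof.
move=> TS /cliqueP cS; apply/cliqueP => x y xT yT; apply: cS; exact: (subsetP TS).
Qed.

Lemma S1 : \sum_(T in cliques e 3) cdeg e T = 4 * kcount e 4.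
Proof.
have -> : \sum_(T in cliques e 3) cdeg e T = \sum_(T in cliques e 3) #|[set S in cliques e 4 | T \subset S]|.
  by apply: eq_bigr => T; rewrite inE => /andP [_ /eqP h]; rewrite /cdeg h.
rewrite dcount /kcount mulnC -sum_nat_const; apply: eq_bigr => S.
rewrite inE => /andP [cS /eqP hS].
rewrite -(_ : 'C(#|S|, 3) = 4); last by rewrite hS.
rewrite -cards_draws; apply: eq_card => T; rewrite !inE.
apply/andP/andP => [[/andP [_ h3] TS]|[TS h3]]; first by split.
by split => //; rewrite h3 andbT (subclique TS cS).
Qed.

Lemma edges3 (R : nmodType) (F : {set V} -> R) a b c :
  a != b -> a != c -> b != c -> e a b -> e a c -> e b c ->
  (\sum_(E in cliques e 2 | E \subset [set a; b; c]) F E = F [set a; b] + F [set a; c] + F [set b; c])%R.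
Proof.
move=> hab hac hbc eab eac ebc.
rewrite (eq_bigl _ _ (edges_eq hab hac hbc eab eac ebc)).
rewrite big_setU1 /=; last by rewrite !inE negb_or ab_ac ?ab_bc.
rewrite big_setU1 /=; last by rewrite !inE ac_bc.
by rewrite big_set1 addrA.
Qed.

End G.


Local Open Scope ring_scope.

Section Main.
Variables (V : finType) (e : rel V) (R : realFieldType) (beta : R).
Hypothesis esym : symmetric e.
Hypothesis eirr : irreflexive e.
Hypothesis hb1 : 1 / 4 <= beta.
Hypothesis hb2 : beta < 1 / 3.
Hypothesis hdeg : forall x : V, (1 - beta) * #|V|%:R <= (vdeg e x)%:R.
Hypothesis hV : (0 < #|V|)%N.

Local Notation n := (#|V|%:R : R).
Local Notation Dn := (@Dn V e R).

Lemma n0 : 0 < n.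
Proof using hV. by rewrite ltr0n. Qed.

Lemma divle (p q r N : R) : 0 < N -> p + q <= r + N -> p / N + q / N - 1 <= r / N.
Proof.
move=> N0 h; by rewrite (M_div3 _ _ (nz N0)) ler_pdivrMr // (divfK (lt0r_neq0 N0)) lerBlDr.
Qed.

Lemma vdegN x : vdeg e x = #|Nb e x|.
Proof. by []. Qed.

Lemma Dn2 a b : e a b -> Dn [set a; b] = #|Nb e a :&: Nb e b|%:R / n.
Proof. by move=> h; rewrite /Defs.Dn cdeg2. Qed.

Lemma Dn3 a b c : e a b -> e a c -> e b c -> Dn [set a; b; c] = #|Nb e a :&: Nb e b :&: Nb e c|%:R / n.
Proof. by move=> *; rewrite /Defs.Dn cdeg3. Qed.

Lemma ylow x : 1 - beta <= (vdeg e x)%:R / n.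
Proof using hV hdeg. by rewrite ler_pdivlMr ?n0. Qed.

Lemma xlow2 a b : e a b -> (vdeg e a)%:R / n + (vdeg e b)%:R / n - 1 <= Dn [set a; b].
Proof using esym eirr hV.
move=> h; rewrite (Dn2 h); apply: divle; first exact: n0.
rewrite -!natrD ler_nat !vdegN -(cardsUI (Nb e a) (Nb e b)) [X in (_ <= X)%N]addnC leq_add2r.
exact: max_card.
Qed.

Lemma xlow a b : e a b -> 1 - 2 * beta <= Dn [set a; b].
Proof using esym eirr hV hdeg.
move=> h; apply: le_trans (xlow2 h); rewrite -(M_2b beta).
by apply: lerB => //; apply: lerD; apply: ylow.
Qed.


Definition term (c : R) (T : {set V}) : R :=
  1 + 3 * beta + c * (Dn T - Num.min (Dn T) beta) - Dn T
    - 2 * (1 - 2 * beta) * beta * (\sum_(E in cliques e 2 | E \subset T) 1 / Dn E).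

Lemma Dle (A B : {set V}) : A \subset B -> #|A|%:R / n <= #|B|%:R / n.
Proof using hV.
move=> AB; apply: ler_wpM2r; first by rewrite invr_ge0 ltW ?n0.
by rewrite ler_nat subset_leq_card.
Qed.

Lemma Dle1 (A : {set V}) : #|A|%:R / n <= 1.
Proof using hV. by rewrite ler_pdivrMr ?n0 // mul1r ler_nat max_card. Qed.

Lemma tri_graph c x y z : beta / (1 - beta) < c -> c <= 1 ->
  x != y -> x != z -> y != z -> e x y -> e x z -> e y z ->
  0 <= term c [set x; y; z] /\ (term c [set x; y; z] = 0 ->
   [/\ (vdeg e x)%:R = (1 - beta) * n, (vdeg e y)%:R = (1 - beta) * n,
       (vdeg e z)%:R = (1 - beta) * n &
       mb beta (Dn [set x; y]) /\ mb beta (Dn [set x; z]) /\ mb beta (Dn [set y; z])]).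
Proof using esym eirr hb1 hb2 hdeg hV.
move=> hc1 hc2 hxy hxz hyz exy exz eyz.
rewrite /term (edges3 esym (fun E => 1 / Dn E) hxy hxz hyz exy exz eyz).
have h1 : Dn [set x; y] <= 1 by rewrite Dn2 // Dle1.
have h2 : Dn [set x; z] <= 1 by rewrite Dn2 // Dle1.
have h3 : Dn [set y; z] <= 1 by rewrite Dn2 // Dle1.
have h4 : Dn [set x; y; z] <= Dn [set x; y] by rewrite Dn3 // Dn2 // Dle // subsetIl.
have h5 : Dn [set x; y; z] <= Dn [set x; z].
  rewrite Dn3 // Dn2 // Dle //; apply/subsetP => v; rewrite !inE.
  by case/andP=> /andP[-> _] ->.
have h6 : Dn [set x; y; z] <= Dn [set y; z].
  rewrite Dn3 // Dn2 // Dle //; apply/subsetP => v; rewrite !inE.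
  by case/andP=> /andP[_ ->] ->.
have h7 : Dn [set x; y; z] <= Dn [set x; y] + Dn [set x; z] + Dn [set y; z]
     - (vdeg e x)%:R / n - (vdeg e y)%:R / n - (vdeg e z)%:R / n + 1.
  rewrite Dn3 // !Dn2 // -subr_ge0 (M_div4 _ _ _ _ _ _ _ (nz n0)).
  apply: divr_ge0; last exact: ltW n0.
  rewrite subr_ge0 -!natrD ler_nat !vdegN -incl3 !leq_add2r.
  exact: max_card.
have [H1 H2] := @tri R beta c ((vdeg e x)%:R / n) ((vdeg e y)%:R / n) ((vdeg e z)%:R / n)
  (Dn [set x; y]) (Dn [set x; z]) (Dn [set y; z]) (Dn [set x; y; z]) hb1 hb2 hc1 hc2
  (ylow x) (ylow y) (ylow z) (xlow2 exy) (xlow2 exz) (xlow2 eyz) h1 h2 h3 h4 h5 h6 h7.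
split => // /H2 [hx hy hz hm]; split => //.
- by rewrite -hx divfK // lt0r_neq0 ?n0.
- by rewrite -hy divfK // lt0r_neq0 ?n0.
- by rewrite -hz divfK // lt0r_neq0 ?n0.
Qed.


Lemma S2 (F : {set V} -> R) :
  \sum_(T in cliques e 3) \sum_(E in cliques e 2 | E \subset T) F E
  = \sum_(E in cliques e 2) (cdeg e E)%:R * F E.
Proof.
under eq_bigr => T _ do rewrite big_mkcondr.
rewrite exchange_big; apply: eq_bigr => E; rewrite inE => /andP [_ /eqP h2].
rewrite -big_mkcondr.
have -> : \sum_(T | (T \in cliques e 3) && (E \subset T)) F E
    = \sum_(T in [set T in cliques e 3 | E \subset T]) F E.
  by apply: eq_bigl => T; rewrite inE.
by rewrite sumr_const /cdeg h2 mulr_natl.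
Qed.

Lemma Dpos E : E \in cliques e 2 -> 0 < Dn E.
Proof using esym eirr hb1 hb2 hdeg hV.
case/K2_dec => u [v [huv euv ->]].
by apply: lt_le_trans (xlow euv); exact: bm hb1 hb2.
Qed.

Lemma keyid (c : R) :
  (1 + 3 * beta) * (kcount e 3)%:R + c * \sum_(T in cliques e 3) Dplus e beta T
  - (2 * (1 - 2 * beta) * beta * n * (kcount e 2)%:R + 4 * (kcount e 4)%:R / n)
  = \sum_(T in cliques e 3) term c T.
Proof using esym eirr hb1 hb2 hdeg hV.
have Dp : forall T, T \in cliques e 3 -> Dplus e beta T = Dn T - Num.min (Dn T) beta.
  move=> T; rewrite inE => /andP [_ /eqP h3].
  rewrite /Dplus /Dminus.
  by have -> : ((4 - #|T|)%:R : R) * beta = beta by rewrite h3 mul1r.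
have sumD : \sum_(T in cliques e 3) Dn T = 4 * (kcount e 4)%:R / n.
  by rewrite /Defs.Dn -mulr_suml -natr_sum S1 natrM.
have sumS : \sum_(T in cliques e 3) (\sum_(E in cliques e 2 | E \subset T) 1 / Dn E)
    = n * (kcount e 2)%:R.
  have -> : n * (kcount e 2)%:R = \sum_(E in cliques e 2) n by rewrite sumr_const mulr_natr.
  rewrite S2; apply: eq_bigr => E hE.
  have cE : (cdeg e E)%:R != 0 :> R.
    apply/eqP => h0; move: (Dpos hE); by rewrite /Defs.Dn h0 mul0r ltxx.
  by rewrite /Defs.Dn mul1r invf_div mulrCA divff // mulr1.
have sumC : \sum_(T in cliques e 3) (1 + 3 * beta) = (1 + 3 * beta) * (kcount e 3)%:R.
  by rewrite sumr_const mulr_natr.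
have sumDp : \sum_(T in cliques e 3) c * (Dn T - Num.min (Dn T) beta)
    = c * \sum_(T in cliques e 3) Dplus e beta T.
  by rewrite mulr_sumr; apply: eq_bigr => T hT; rewrite Dp.
rewrite /term [in RHS]sumrB [in RHS]sumrB [in RHS]big_split /= sumC sumDp sumD -[in RHS]mulr_sumr sumS.
by rewrite M_fin.
Qed.


Lemma nbr_common x y : e x y -> exists w, e x w /\ e y w.
Proof using esym eirr hb1 hb2 hdeg hV.
move=> exy.
have : (0 < #|Nb e x :&: Nb e y|)%N.
  rewrite lt0n; apply/eqP => h0.
  have xy : x != y by apply/eqP => h; rewrite h eirr in exy.
  by move: (Dpos (in_K2 esym xy exy)); rewrite Dn2 // h0 mul0r ltxx.
by case/card_gt0P => w; rewrite !inE => /andP [? ?]; exists w.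
Qed.

Lemma main_sec :
  let lhs : R :=
    (1 + 3 * beta) * (kcount e 3)%:R
    + 2 / (1 - 2 * beta) * (1 - 3 * beta + (4 * beta - 1) / (29 - 75 * beta))
      * \sum_(T in cliques e 3) Dplus e beta T in
  let rhs : R :=
    2 * (1 - 2 * beta) * beta * n * (kcount e 2)%:R + 4 * (kcount e 4)%:R / n in
  rhs <= lhs /\
  (lhs = rhs ->
     (forall x : V, (vdeg e x)%:R = (1 - beta) * n) /\
     (forall E, E \in cliques e 2 -> Dn E = 1 - 2 * beta \/ Dn E = 2 * beta)).
Proof using esym eirr hb1 hb2 hdeg hV.
move=> lhs rhs.
have [hc1 hc2] := cfacts hb1 hb2.
set c := 2 / (1 - 2 * beta) * (1 - 3 * beta + (4 * beta - 1) / (29 - 75 * beta)).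
have K := keyid c.
have irr3 : forall x y w, e x y -> e x w -> e y w -> [/\ x != y, x != w & y != w].
  move=> x y w exy exw eyw; split; apply/eqP => h.
  - by rewrite h eirr in exy.
  - by rewrite h eirr in exw.
  - by rewrite h eirr in eyw.
have tn : forall T, T \in cliques e 3 -> 0 <= term c T.
  move=> T /K3_dec [a [b [d [[hab had hbd] [eab ead ebd] ->]]]].
  by have [] := tri_graph hc1 hc2 hab had hbd eab ead ebd.
split.
  rewrite -subr_ge0 /lhs /rhs K; apply: sumr_ge0 => T; exact: tn.
move=> heq.
move: heq; rewrite /lhs /rhs => heq.
have h0 : \sum_(T in cliques e 3) term c T = 0 by rewrite -K heq subrr.
have all0 := psumr_eq0P tn h0.
split.
- move=> x.
  have : (0 < vdeg e x)%N.
    rewrite -(ltr0n R); apply: lt_le_trans (hdeg x).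
    by apply: mulr_gt0; [exact: b1 hb1 hb2 | exact: n0].
  rewrite /vdeg; case/card_gt0P => y; rewrite inE => exy.
  have [w [exw eyw]] := nbr_common exy.
  have [hxy hxw hyw] := irr3 _ _ _ exy exw eyw.
  have [_ H] := tri_graph hc1 hc2 hxy hxw hyw exy exw eyw.
  by case: (H (all0 _ (in_K3 esym hxy hxw hyw exy exw eyw))).
- move=> E /K2_dec [u [v [huv euv ->]]].
  have [w [euw evw]] := nbr_common euv.
  have [_ huw hvw] := irr3 _ _ _ euv euw evw.
  have [_ H] := tri_graph hc1 hc2 huv huw hvw euv euw evw.
  by case: (H (all0 _ (in_K3 esym huv huw hvw euv euw evw))) => _ _ _ [].
Qed.

End Main.

Unset Implicit Arguments.

Theorem mainTheorem15 (R : realFieldType) (V : finType) (e : rel V) (beta : R) :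
  symmetric e -> irreflexive e ->
  1 / 4 <= beta -> beta < 1 / 3 ->
  (* minimum degree of G is exactly (1 - beta) n *)
  (forall x : V, (1 - beta) * #|V|%:R <= (vdeg e x)%:R) ->
  (exists x : V, (vdeg e x)%:R = (1 - beta) * #|V|%:R) ->
  let n : R := #|V|%:R in
  let lhs : R :=
    (1 + 3 * beta) * (kcount e 3)%:R
    + 2 / (1 - 2 * beta) * (1 - 3 * beta + (4 * beta - 1) / (29 - 75 * beta))
      * \sum_(T in cliques e 3) Dplus e beta T in
  let rhs : R :=
    2 * (1 - 2 * beta) * beta * n * (kcount e 2)%:R + 4 * (kcount e 4)%:R / n in
  rhs <= lhs /\
  (lhs = rhs ->
     (forall x : V, (vdeg e x)%:R = (1 - beta) * n) /\
     (forall E, E \in cliques e 2 -> @Dn V e R E = 1 - 2 * beta \/ @Dn V e R E = 2 * beta)).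
Proof.
move=> esym eirr hb1 hb2 hdeg [x0 _].
have hV : (0 < #|V|)%N by apply/card_gt0P; exists x0.
exact: (main_sec esym eirr hb1 hb2 hdeg hV).
Qed.
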